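(* Let $(X,x)$ be a pointed diffeological space and let $\mathcal{C}$ be a local generating category of curves of $X$ at $x$. Then the natural map $\operatorname{colim}(\mathcal{C} \hookrightarrow \mathcal{G}(X,x) \to \mathrm{Vect}) \to T_x(X)$ is an epimorphism.
   Context: A diffeological space is a set $X$ together with, for every open subset $U$ of every $\mathbb{R}^n$, a set of functions $U\to X$ called plots, such that constant maps are plots, the composite of a plot with a smooth map $V\to U$ between open subsets of Euclidean spaces is a plot, and a function which is locally a plot is a plot; smooth maps send plots to plots. For a pointed diffeological space $(X,x)$, let $\mathcal{G}(X,x)$ be the category whose objects are plots $p:U\to X$ with $U$ a connected open neighbourhood of $0$ in some $\mathbb{R}^n$ and $p(0)=x$, and whose morphisms $p\to q$ (with $q:V\to X$) are germs at $0$ of smooth maps $f:W\to V$, $W$ an open neighbourhood of $0$ in $U$, with $f(0)=0$ and $p|_W=q\circ f$. The functor $\mathcal{G}(X,x)\to\mathrm{Vect}$ sends $p:U\to X$ to $T_0(U)$ and $[f]$ to $f_*:T_0(U)\to T_0(V)$; its colimit is the internal tangent space $T_x(X)$. A local generating set of curves of $X$ at $x$ is a set $C$ of objects of $\mathcal{G}(X,x)$ with domain $\mathbb{R}$ such that for each object $p:\mathbb{R}\to X$ of $\mathcal{G}(X,x)$ there exist $q\in C$ and a morphism $p\to q$ in $\mathcal{G}(X,x)$. A local generating category of curves of $X$ at $x$ is a subcategory $\mathcal{C}$ of $\mathcal{G}(X,x)$ whose object set is a local generating set of curves. *)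

(* Defs.v *)
From HB Require Import structures.
From mathcomp Require Import all_boot all_order all_algebra.
From mathcomp Require Import all_classical all_reals all_analysis.
Set Implicit Arguments. Unset Strict Implicit. Unset Printing Implicit Defensive.
Import Order.TTheory GRing.Theory Num.Theory.
Import numFieldNormedType.Exports.
Local Open Scope classical_set_scope.
Local Open Scope ring_scope.

Fixpoint iderive (R : realType) (V W : normedModType R) (vs : seq V) (f : V -> W)
  : V -> W :=
  match vs with
  | [::] => f
  | v :: vs' => fun a => derive (iderive vs' f) a v
  end.

Definition smooth_on (R : realType) (V W : normedModType R) (U : set V) (f : V -> W) :=
  forall vs : seq V,
    (forall a, U a -> forall v, derivable (iderive vs f) a v) /\
    (forall a, U a -> {for a, continuous (iderive vs f)}).

(* A diffeology on X.  Plots with domain an open U of R^n are represented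
   by total functions 'rV_n -> X of which only the restriction to U matters. *)
Record diffeology (R : realType) (X : Type) := Diffeology {
  plot : forall n : nat, set 'rV[R]_n -> ('rV[R]_n -> X) -> Prop;
  plot_open : forall n U p, @plot n U p -> open U;
  plot_ext : forall n U (p q : 'rV[R]_n -> X),
      @plot n U p -> (forall u, U u -> p u = q u) -> @plot n U q;
  plot_const : forall n (U : set 'rV[R]_n) (x : X), open U -> plot U (fun _ => x);
  plot_comp : forall n m (U : set 'rV[R]_n) (V : set 'rV[R]_m) p g,
      plot U p -> open V -> smooth_on V g -> g @` V `<=` U -> plot V (p \o g);
  plot_local : forall n (U : set 'rV[R]_n) p, open U ->
      (forall u, U u -> exists V : set 'rV[R]_n,
          [/\ open V, V u, V `<=` U & plot V p]) -> plot U p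
}.

Record pobj (R : realType) (X : Type) := PObj {
  odim : nat;
  odom : set 'rV[R]_odim;
  oplot : 'rV[R]_odim -> X
}.
Arguments odom {R X} p _.
Arguments oplot {R X} p _.
Arguments odim {R X} p.

Section GermCat.
Variables (R : realType) (X : Type) (D : diffeology R X) (x : X).

Definition Gob (p : pobj R X) : Prop :=
  [/\ plot D (odom p) (oplot p), open (odom p), connected (odom p),
      odom p 0 & oplot p 0 = x].

(* A representative (W, f) of a morphism p -> q in G(X,x). *)
Definition Gmor (p q : pobj R X) (W : set 'rV[R]_(odim p))
    (f : 'rV[R]_(odim p) -> 'rV[R]_(odim q)) : Prop :=
  open W /\ W 0 /\ W `<=` odom p /\ smooth_on W f /\
  f @` W `<=` odom q /\ f 0 = 0 /\
  (forall w, W w -> oplot p w = oplot q (f w)).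
Arguments Gmor : clear implicits.

Definition germ_eq (n m : nat) (W : set 'rV[R]_n) (f : 'rV[R]_n -> 'rV[R]_m)
    (W' : set 'rV[R]_n) (f' : 'rV[R]_n -> 'rV[R]_m) : Prop :=
  exists N : set 'rV[R]_n, [/\ open N, N 0, N `<=` W `&` W' &
      forall w, N w -> f w = f' w].
Arguments germ_eq : clear implicits.
Arguments germ_eq {n m}.

Definition tmap (n m : nat) (f : 'rV[R]_n -> 'rV[R]_m) (v : 'rV[R]_n) : 'rV[R]_m :=
  derive f 0 v.

Definition subcategory (Cob : pobj R X -> Prop)
    (Cmor : forall p q : pobj R X, set 'rV[R]_(odim p) ->
              ('rV[R]_(odim p) -> 'rV[R]_(odim q)) -> Prop) : Prop :=
  [/\ (forall p, Cob p -> Gob p),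
      (forall p q W f, Cmor p q W f -> [/\ Cob p, Cob q & Gmor p q W f]),
      (forall p q W f W' f', Cmor p q W f -> Gmor p q W' f' ->
          germ_eq W f W' f' -> Cmor p q W' f'),
      (forall p, Cob p -> Cmor p p (odom p) id) &
      (forall p q r W f W' g, Cmor p q W f -> Cmor q r W' g ->
          Cmor p r (W `&` f @^-1` W') (g \o f))].

Definition is_curve (p : pobj R X) : Prop := odim p = 1%N /\ odom p = setT.

Definition local_generating_set (Cob : pobj R X -> Prop) : Prop :=
  (forall q, Cob q -> Gob q /\ is_curve q) /\
  (forall p, Gob p -> is_curve p ->
     exists q W f, Cob q /\ Gmor p q W f).

Definition local_generating_category (Cob : pobj R X -> Prop)
    (Cmor : forall p q : pobj R X, set 'rV[R]_(odim p) ->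
              ('rV[R]_(odim p) -> 'rV[R]_(odim q)) -> Prop) : Prop :=
  subcategory Cob Cmor /\ local_generating_set Cob.

Definition is_lin (n : nat) (W : lmodType R) (h : 'rV[R]_n -> W) : Prop :=
  forall (a : R) u v, h (a *: u + v) = a *: h u + h v.

(* A cocone with vertex W over the diagram (Dob, Dmor) of the functor
   p |-> T_0(dom p), [f] |-> f_*. *)
Definition cocone (W : lmodType R) (Dob : pobj R X -> Prop)
    (Dmor : forall p q : pobj R X, set 'rV[R]_(odim p) ->
              ('rV[R]_(odim p) -> 'rV[R]_(odim q)) -> Prop)
    (alpha : forall p : pobj R X, 'rV[R]_(odim p) -> W) : Prop :=
  (forall p, Dob p -> is_lin (alpha p)) /\
  (forall p q Wd f, Dob p -> Dob q -> Dmor p q Wd f ->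
     forall v, alpha q (tmap f v) = alpha p v).

End GermCat.
Arguments Gmor {R X} p q W f.
Arguments Gob {R X} D x p.

(* Main.v *)
From HB Require Import structures.
Require Import Defs.
From mathcomp Require Import all_boot all_order all_algebra.
From mathcomp Require Import all_classical all_reals all_analysis.
From mathcomp Require Import lra.
Import Order.TTheory GRing.Theory Num.Theory.
Import numFieldNormedType.Exports.
Local Open Scope classical_set_scope.
Local Open Scope ring_scope.
Section S.
Local Set Implicit Arguments. Local Unset Strict Implicit.
Variable R : realType.
Lemma is_derive_val (V W : normedModType R) (f : V -> W) a v d d' :
  is_derive a v f d -> d = d' -> is_derive a v f d'.
Proof. by move=> H <-. Qed.
Lemma is_derive_fun (V W : normedModType R) (f g : V -> W) a v d :
  is_derive a v f d -> f = g -> is_derive a v g d.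
Proof. by move=> H <-. Qed.
Lemma kd (s m c : R) : is_derive (0:R) 1 (fun h : R => s * sin (h * m + c)) (s * (cos c * m)).
Proof.
have Hi : is_derive (0:R) 1 (fun h : R => h * m + c) m.
  have H1 := @is_deriveZ R R R id m 0 1 1 (@is_derive_id R R 0 1).
  have H2 := @is_deriveD R R R (m *: id) (cst c) 0 1 (m *: 1) 0 H1 (@is_derive_cst R R R c 0 1).
  have E : m *: id + cst c = (fun h : R => h * m + c).
    by apply/funext => h /=; rewrite mulrC.
  rewrite E in H2; apply: (is_derive_val H2).
  by rewrite addr0 /GRing.scale /= mulr1.
have Ho : is_derive (0 * m + c) 1 (fun t : R => s * sin t) (s * cos c).
  rewrite mul0r add0r.
  have H := @is_deriveZ R R R (@sin R) s c 1 _ (is_derive_sin c).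
  exact: H.
have := @is_derive1_comp R (fun t => s * sin t) (fun h => h * m + c) 0 _ _ Ho Hi.
by rewrite mulrA.
Qed.

Lemma dir_eq (V W : normedModType R) (f : V -> W) (g : R -> W) a v :
  (forall h, f (h *: v + a) = g h) ->
  derive f a v = derive g 0 1 /\ (derivable f a v <-> derivable g 0 1).
Proof.
move=> E; rewrite /derive /derivable.
have -> : (fun h : R => h^-1 *: ((f \o shift a) (h *: v) - f a)) =
          (fun h : R => h^-1 *: ((g \o shift 0) (h *: 1) - g 0)).
  have Ea : f a = g 0 by rewrite -E scale0r add0r.
  by apply/funext => h /=; rewrite E Ea addr0 [_%:A]mulr1.
by [].
Qed.

Definition Fn n (w : 'rV[R]_n) (s p : R) : 'rV[R]_1 -> 'rV[R]_n :=
  fun a => (s * sin (a 0 0 + p)) *: w.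

Lemma Fn_der n (w : 'rV[R]_n) (s p : R) (a u : 'rV[R]_1) :
  derivable (Fn w s p) a u /\ derive (Fn w s p) a u = Fn w (s * u 0 0) (p + pi / 2) a.
Proof.
set m := u 0 0; set c := a 0 0 + p.
have Eh : forall h, Fn w s p (h *: u + a) = (s * sin (h * m + c)) *: w.
  by move=> h; rewrite /Fn !mxE /c /m addrA.
have [E1 E2] := @dir_eq _ _ (Fn w s p) (fun h => (s * sin (h * m + c)) *: w) a u Eh.
have K := kd s m c.
have dk : differentiable (fun h : R => s * sin (h * m + c)) 0.
  by apply/derivable1_diffP; apply: ex_derive.
have dg := differentiableZl w dk.
split; first by apply/E2; exact: diff_derivable.
rewrite E1 deriveE // diffZl // -deriveE // derive_val.
by rewrite /Fn addrA sinDpihalf -/c mulrA mulrAC.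
Qed.

Lemma Fn_cont n (w : 'rV[R]_n) (s p : R) (a : 'rV[R]_1) :
  {for a, continuous (Fn w s p)}.
Proof.
apply: continuousZr_tmp.
have Hi : {for a, continuous (fun b : 'rV[R]_1 => b 0 0 + p)}.
  apply: continuousD; last exact: cst_continuous.
  exact/differentiable_continuous/differentiable_coord.
have Ho : {for (a 0 0 + p), continuous (fun t : R => s * sin t)}.
  apply/differentiable_continuous/derivable1_diffP.
  have H := @is_deriveZ R R R (@sin R) s (a 0 0 + p) 1 _ (is_derive_sin (a 0 0 + p)).
  exact: (@ex_derive _ _ _ _ _ _ _ H).
exact: (continuous_comp Hi Ho).
Qed.

Lemma Fn_iderive n (w : 'rV[R]_n) (vs : seq 'rV[R]_1) (s p : R) :
  exists s' p', iderive vs (Fn w s p) = Fn w s' p'.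
Proof.
elim: vs => [|v vs [s1 [p1 IH]]]; first by exists s, p.
exists (s1 * v 0 0), (p1 + pi / 2); apply/funext => a /=.
by rewrite IH; case: (Fn_der w s1 p1 a v).
Qed.

Lemma Fn_smooth n (w : 'rV[R]_n) (s p : R) (U : set 'rV[R]_1) :
  smooth_on U (Fn w s p).
Proof.
move=> vs; have [s' [p' ->]] := Fn_iderive w vs s p.
split=> a _; last exact: Fn_cont.
by move=> v; case: (Fn_der w s' p' a v).
Qed.
End S.

Lemma connected_rV1 (R : realType) : connected [set: 'rV[R]_1].
Proof.
pose e : 'rV[R]_1 := const_mx 1.
have -> : [set: 'rV[R]_1] = (fun t : R => t *: e) @` setT.
  apply/seteqP; split=> // a _; exists (a 0 0) => //.
  by apply/matrixP => i j; rewrite !ord1 !mxE mulr1.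
apply: connected_continuous_connected.
  by apply/connected_intervalP => y z _ _ t _.
by apply: continuous_subspaceT => t; apply: scalel_continuous.
Qed.

Lemma lin_scale {R : realType} n (W : lmodType R) (h : 'rV[R]_n -> W) :
  is_lin h -> forall (a : R) u, h (a *: u) = a *: h u.
Proof.
move=> H a u.
have h0 : h 0 = 0.
  have E := H 1 0 0; rewrite scaler0 add0r scale1r in E.
  by apply: (addrI (h 0)); rewrite addr0 -E.
have E := H a u 0; rewrite addr0 h0 addr0 in E; exact: E.
Qed.

Theorem proposition3p3 (R : realType) (X : Type) (D : diffeology R X) (x : X)
    (Cob : pobj R X -> Prop)
    (Cmor : forall p q : pobj R X, set 'rV[R]_(odim p) ->
              ('rV[R]_(odim p) -> 'rV[R]_(odim q)) -> Prop) :
  local_generating_category D x Cob Cmor ->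
  forall (W : lmodType R) (alpha beta : forall p : pobj R X, 'rV[R]_(odim p) -> W),
    cocone (Gob D x) (@Gmor R X) alpha ->
    cocone (Gob D x) (@Gmor R X) beta ->
    (forall q, Cob q -> alpha q =1 beta q) ->
    forall p, Gob D x p -> alpha p =1 beta p.
Proof.
move=> [_ [HC1 HC2]] W alpha beta [linA natA] [linB natB] Hab p Gp v.
have Gp' := Gp; case: Gp' => plotp openU connU U0 p0x.
have := openU 0 U0; rewrite /interior => /nbhs_ballP [r r0 Br].
have key : forall w : 'rV[R]_(odim p), `|w| < r -> alpha p w = beta p w.
  move=> w wr.
  set g := Fn w 1 0.
  have gU : g @` setT `<=` odom p.
    move=> _ [a _ <-]; apply: Br; rewrite -ball_normE /ball_ /= sub0r normrN.
    rewrite /g /Fn normrZ mul1r; apply: le_lt_trans wr.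
    by rewrite ler_piMl // sin_max.
  have g0 : g 0 = 0 by rewrite /g /Fn mxE addr0 sin0 mulr0 scale0r.
  pose q := @PObj R X 1 setT (oplot p \o g).
  have Gq : Gob D x q.
    split => //=; [|exact: openT|exact: connected_rV1|by rewrite g0].
    exact: (plot_comp plotp openT (Fn_smooth _ _ _ _) gU).
  have Mq : Gmor q p setT g.
    by split; [exact: openT|split=>//; split=>//; split; [exact: Fn_smooth|split=>//]].
  pose e : 'rV[R]_1 := const_mx 1.
  have te : tmap g e = w.
    rewrite /tmap; case: (Fn_der w 1 0 0 e) => _ ->.
    by rewrite /Fn !mxE mul1r mul1r add0r sinDpihalf cos0 scale1r.
  have [q' [W' [f [Cq' Mf]]]] := HC2 q Gq (conj erefl erefl).
  have Gq' := (HC1 q' Cq').1.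
  rewrite -te (natA _ _ _ _ Gq Gp Mq) (natB _ _ _ _ Gq Gp Mq).
  by rewrite -(natA _ _ _ _ Gq Gq' Mf) -(natB _ _ _ _ Gq Gq' Mf) Hab.
have [->|vn0] := eqVneq v 0; first by apply: key; rewrite normr0.
have nv : 0 < `|v| by rewrite normr_gt0.
set c := r / 2 / `|v|.
have c0 : 0 < c by rewrite /c divr_gt0 // divr_gt0.
have := key (c *: v); rewrite normrZ gtr0_norm // /c divfK ?gt_eqF //.
rewrite (@lin_scale R _ W _ (linA _ Gp)) (@lin_scale R _ W _ (linB _ Gp)).
have r0' : 0 < r := r0.
move=> H; have {H} H : c *: alpha p v = c *: beta p v by apply: H; lra.
have cn0 : c != 0 by rewrite gt_eqF.
by rewrite -[alpha p v]scale1r -(mulVf cn0) -scalerA H scalerA mulVf // scale1r.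
Qed.
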